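(* Let $(\mathcal{D},\Psi)$ be a braided monoidal category, let $(A,m,u)$ be an algebra in $\mathcal{D}$, let $S$ be an object of $\mathcal{D}$ and $\phi\colon S\to A$ a morphism in $\mathcal{D}$. Then the left centralizer $\operatorname{Cent}^l_A(S)\to A$ admits the structure of an algebra in $\mathcal{D}$, unique up to unique isomorphism of algebras, such that the structure morphism $\operatorname{Cent}^l_A(S)\to A$ is a morphism of algebras in $\mathcal{D}$.
   Context: All categories are $\Bbbk$-linear abelian monoidal categories over a field $\Bbbk$ (associativity and unit isomorphisms suppressed). The left centralizer $\operatorname{Cent}^l_A(S)\to A$ is defined as the terminal object in the category whose objects are pairs $(C,\gamma)$ with $C\in\mathcal{D}$ and $\gamma\colon C\to A$ a morphism in $\mathcal{D}$ satisfying $m(\gamma\otimes\phi)=m(\phi\otimes\gamma)\Psi_{C,S}$ as morphisms $C\otimes S\to A$, and whose morphisms $(C,\gamma)\to(C',\gamma')$ are morphisms $f\colon C\to C'$ in $\mathcal{D}$ with $\gamma' f=\gamma$. *)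

(* Defs.v *)
Set Implicit Arguments.
Unset Strict Implicit.

Record BraidedMonoidalCategory := {
  Obj : Type;
  Hom : Obj -> Obj -> Type;
  comp : forall {X Y Z : Obj}, Hom Y Z -> Hom X Y -> Hom X Z;
  idm : forall X : Obj, Hom X X;
  comp_assoc : forall X Y Z W (f : Hom X Y) (g : Hom Y Z) (h : Hom Z W),
      comp h (comp g f) = comp (comp h g) f;
  comp_id_l : forall X Y (f : Hom X Y), comp (idm Y) f = f;
  comp_id_r : forall X Y (f : Hom X Y), comp f (idm X) = f;

  tens : Obj -> Obj -> Obj;
  tensm : forall {X X' Y Y' : Obj}, Hom X Y -> Hom X' Y' -> Hom (tens X X') (tens Y Y');
  tensm_id : forall X Y, tensm (idm X) (idm Y) = idm (tens X Y);
  tensm_comp : forall X X' Y Y' Z Z' (f : Hom X Y) (f' : Hom X' Y')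
      (g : Hom Y Z) (g' : Hom Y' Z'),
      tensm (comp g f) (comp g' f') = comp (tensm g g') (tensm f f');
  unit : Obj;
  assoc : forall X Y Z, Hom (tens (tens X Y) Z) (tens X (tens Y Z));
  assoc_inv : forall X Y Z, Hom (tens X (tens Y Z)) (tens (tens X Y) Z);
  assoc_iso1 : forall X Y Z, comp (assoc_inv X Y Z) (assoc X Y Z) = idm _;
  assoc_iso2 : forall X Y Z, comp (assoc X Y Z) (assoc_inv X Y Z) = idm _;
  assoc_nat : forall X X' Y Y' Z Z' (f : Hom X X') (g : Hom Y Y') (h : Hom Z Z'),
      comp (assoc X' Y' Z') (tensm (tensm f g) h)
      = comp (tensm f (tensm g h)) (assoc X Y Z);
  lunit : forall X, Hom (tens unit X) X;
  lunit_inv : forall X, Hom X (tens unit X);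
  lunit_iso1 : forall X, comp (lunit_inv X) (lunit X) = idm _;
  lunit_iso2 : forall X, comp (lunit X) (lunit_inv X) = idm _;
  lunit_nat : forall X Y (f : Hom X Y),
      comp (lunit Y) (tensm (idm unit) f) = comp f (lunit X);
  runit : forall X, Hom (tens X unit) X;
  runit_inv : forall X, Hom X (tens X unit);
  runit_iso1 : forall X, comp (runit_inv X) (runit X) = idm _;
  runit_iso2 : forall X, comp (runit X) (runit_inv X) = idm _;
  runit_nat : forall X Y (f : Hom X Y),
      comp (runit Y) (tensm f (idm unit)) = comp f (runit X);
  pentagon : forall W X Y Z,
      comp (assoc W X (tens Y Z)) (assoc (tens W X) Y Z)
      = comp (tensm (idm W) (assoc X Y Z))
             (comp (assoc W (tens X Y) Z) (tensm (assoc W X Y) (idm Z)));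
  triangle : forall X Y,
      comp (tensm (idm X) (lunit Y)) (assoc X unit Y) = tensm (runit X) (idm Y);

  braid : forall X Y, Hom (tens X Y) (tens Y X);
  braid_inv : forall X Y, Hom (tens Y X) (tens X Y);
  braid_iso1 : forall X Y, comp (braid_inv X Y) (braid X Y) = idm _;
  braid_iso2 : forall X Y, comp (braid X Y) (braid_inv X Y) = idm _;
  braid_nat : forall X X' Y Y' (f : Hom X X') (g : Hom Y Y'),
      comp (braid X' Y') (tensm f g) = comp (tensm g f) (braid X Y);
  hexagon1 : forall X Y Z,
      comp (assoc Y Z X) (comp (braid X (tens Y Z)) (assoc X Y Z))
      = comp (tensm (idm Y) (braid X Z))
             (comp (assoc Y X Z) (tensm (braid X Y) (idm Z)));
  hexagon2 : forall X Y Z,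
      comp (assoc_inv Z X Y) (comp (braid (tens X Y) Z) (assoc_inv X Y Z))
      = comp (tensm (braid X Z) (idm Y))
             (comp (assoc_inv X Z Y) (tensm (idm X) (braid Y Z)))
}.

Arguments Hom : clear implicits.
Arguments Obj : clear implicits.
Arguments comp {_ _ _ _} _ _.
Arguments idm {_} _.
Arguments tens {_} _ _.
Arguments tensm {_ _ _ _ _} _ _.
Arguments unit {_}.
Arguments assoc {_} _ _ _.
Arguments lunit {_} _.
Arguments runit {_} _.
Arguments braid {_} _ _.

Section Algebras.
Variable D : BraidedMonoidalCategory.

Definition is_algebra (A : Obj D) (m : Hom D (tens A A) A) (u : Hom D unit A) : Prop :=
  comp m (tensm m (idm A)) = comp m (comp (tensm (idm A) m) (assoc A A A))
  /\ comp m (tensm u (idm A)) = lunit A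
  /\ comp m (tensm (idm A) u) = runit A.

Definition is_algebra_morphism (B A : Obj D)
    (mB : Hom D (tens B B) B) (uB : Hom D unit B)
    (mA : Hom D (tens A A) A) (uA : Hom D unit A) (f : Hom D B A) : Prop :=
  comp f mB = comp mA (tensm f f) /\ comp f uB = uA.

Definition is_iso (X Y : Obj D) (f : Hom D X Y) : Prop :=
  exists g : Hom D Y X, comp g f = idm X /\ comp f g = idm Y.

(* objects of the category whose terminal object is Cent^l_A(S) *)
Definition centralizes (A S : Obj D) (m : Hom D (tens A A) A) (phi : Hom D S A)
    (C : Obj D) (gamma : Hom D C A) : Prop :=
  comp m (tensm gamma phi) = comp m (comp (tensm phi gamma) (braid C S)).

Definition is_left_centralizer (A S : Obj D) (m : Hom D (tens A A) A)
    (phi : Hom D S A) (C : Obj D) (gamma : Hom D C A) : Prop :=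
  centralizes m phi gamma /\
  forall (C' : Obj D) (gamma' : Hom D C' A), centralizes m phi gamma' ->
    exists! f : Hom D C' C, comp gamma f = gamma'.

End Algebras.

(* Main.v *)
Require Import Defs.
From Corelib Require Import ssreflect.

Section Lemmas.
Variable D : BraidedMonoidalCategory.
Local Notation "g ∘ f" := (comp g f) (at level 40, left associativity).
Local Notation "f ⊗ g" := (tensm f g) (at level 35).
Local Notation "1" := (idm _).

Lemma cx {X Y Y' Z W : Obj D} (a : Hom D Y Z) (b : Hom D X Y) (c : Hom D Y' Z) (d : Hom D X Y')
  : a ∘ b = c ∘ d -> forall (x : Hom D W X), a ∘ (b ∘ x) = c ∘ (d ∘ x).
Proof. move=> H x. by rewrite !comp_assoc H. Qed.

Lemma tl {X Y Z : Obj D} (W : Obj D) (f : Hom D X Y) (g : Hom D Y Z) :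
  (g ∘ f) ⊗ idm W = (g ⊗ 1) ∘ (f ⊗ 1).
Proof. by rewrite -tensm_comp comp_id_l. Qed.

Lemma tr {X Y Z : Obj D} (W : Obj D) (f : Hom D X Y) (g : Hom D Y Z) :
  idm W ⊗ (g ∘ f) = (1 ⊗ g) ∘ (1 ⊗ f).
Proof. by rewrite -tensm_comp comp_id_l. Qed.

Lemma xch1 {X Y X' Y' : Obj D} (f : Hom D X Y) (g : Hom D X' Y') :
  f ⊗ g = (f ⊗ 1) ∘ (1 ⊗ g).
Proof. by rewrite -tensm_comp comp_id_l comp_id_r. Qed.

Lemma xch2 {X Y X' Y' : Obj D} (f : Hom D X Y) (g : Hom D X' Y') :
  f ⊗ g = (1 ⊗ g) ∘ (f ⊗ 1).
Proof. by rewrite -tensm_comp comp_id_l comp_id_r. Qed.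

Lemma mono_of {X Y Z : Obj D} (f : Hom D X Y) (g : Hom D Y X) (a b : Hom D Z X) :
  g ∘ f = 1 -> f ∘ a = f ∘ b -> a = b.
Proof.
  move=> H E. by rewrite -(comp_id_l a) -(comp_id_l b) -H -!comp_assoc E.
Qed.

Lemma tensI_r_inj {X Y : Obj D} (f g : Hom D X Y) : f ⊗ idm unit = g ⊗ idm unit -> f = g.
Proof.
  move=> E.
  rewrite -(comp_id_r f) -(comp_id_r g) -(runit_iso2 X) !comp_assoc -!runit_nat E //.
Qed.

Lemma tensI_l_inj {X Y : Obj D} (f g : Hom D X Y) : idm unit ⊗ f = idm unit ⊗ g -> f = g.
Proof.
  move=> E.
  rewrite -(comp_id_r f) -(comp_id_r g) -(lunit_iso2 X) !comp_assoc -!lunit_nat E //.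
Qed.

Lemma kelly (X Y : Obj D) : (idm X ⊗ runit Y) ∘ assoc X Y unit = runit (tens X Y).
Proof.
  apply: tensI_r_inj.
  apply: (@mono_of _ _ _ (assoc X Y unit) (assoc_inv X Y unit) _ _ (assoc_iso1 X Y unit)).
  rewrite -(triangle (tens X Y) unit) -(tensm_id X Y).
  rewrite comp_assoc assoc_nat -comp_assoc pentagon.
  rewrite !comp_assoc -tr triangle.
  rewrite tl comp_assoc -assoc_nat.
  by [].
Qed.

Lemma kelly' (X Y : Obj D) : idm X ⊗ runit Y = runit (tens X Y) ∘ assoc_inv X Y unit.
Proof. by rewrite -kelly -comp_assoc assoc_iso2 comp_id_r. Qed.

Lemma triangle' (X Y : Obj D) : runit X ⊗ idm Y ∘ assoc_inv X unit Y = idm X ⊗ lunit Y.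
Proof. by rewrite -triangle -comp_assoc assoc_iso2 comp_id_r. Qed.

Lemma rho_braid (S : Obj D) : runit S ∘ braid unit S = lunit S.
Proof.
  apply: tensI_l_inj.
  apply: (@mono_of _ _ _ (braid unit S) (braid_inv unit S) _ _ (braid_iso1 unit S)).
  rewrite tr kelly' !comp_assoc -runit_nat -!comp_assoc.
  rewrite -hexagon2 !comp_assoc -kelly' -(braid_nat (runit unit)) -comp_assoc triangle'.
  by [].
Qed.

Lemma braid_tens (X Y Z : Obj D) : braid (tens X Y) Z =
  assoc Z X Y ∘ ((braid X Z ⊗ 1) ∘ (assoc_inv X Z Y ∘ (1 ⊗ braid Y Z))) ∘ assoc X Y Z.
Proof.
  rewrite -hexagon2 !comp_assoc assoc_iso2 comp_id_l -comp_assoc assoc_iso1 comp_id_r //.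
Qed.

Lemma tcomp {X X' Y Y' Z Z' : Obj D} (a : Hom D Y Z) (b : Hom D Y' Z') (c : Hom D X Y) (d : Hom D X' Y') :
  (a ⊗ b) ∘ (c ⊗ d) = (a ∘ c) ⊗ (b ∘ d).
Proof. by rewrite tensm_comp. Qed.

Variables (A : Obj D) (m : Hom D (tens A A) A) (u : Hom D unit A) (HA : is_algebra m u).
Variables (S : Obj D) (phi : Hom D S A).

Lemma L_mm {X Y Z : Obj D} (f : Hom D X A) (g : Hom D Y A) (h : Hom D Z A) :
  m ∘ ((m ∘ (f ⊗ g)) ⊗ h) = m ∘ (f ⊗ (m ∘ (g ⊗ h))) ∘ assoc X Y Z.
Proof.
  have E : (m ∘ (f ⊗ g)) ⊗ h = (m ⊗ 1) ∘ ((f ⊗ g) ⊗ h) by rewrite tcomp comp_id_l.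
  have E2 : f ⊗ (m ∘ (g ⊗ h)) = (1 ⊗ m) ∘ (f ⊗ (g ⊗ h)) by rewrite tcomp comp_id_l.
  rewrite E E2 comp_assoc (proj1 HA) -!comp_assoc assoc_nat //.
Qed.

Lemma L_mm' {X Y Z : Obj D} (f : Hom D X A) (g : Hom D Y A) (h : Hom D Z A) :
  m ∘ (f ⊗ (m ∘ (g ⊗ h))) = m ∘ ((m ∘ (f ⊗ g)) ⊗ h) ∘ assoc_inv X Y Z.
Proof. by rewrite L_mm -comp_assoc assoc_iso2 comp_id_r. Qed.

Lemma cent_comp {C C' : Obj D} (g : Hom D C A) (h : Hom D C' C) :
  centralizes m phi g -> centralizes m phi (g ∘ h).
Proof.
  rewrite /centralizes => H.
  have E : (g ∘ h) ⊗ phi = (g ⊗ phi) ∘ (h ⊗ 1) by rewrite tcomp comp_id_r.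
  have E2 : phi ⊗ (g ∘ h) = (phi ⊗ g) ∘ (1 ⊗ h) by rewrite tcomp comp_id_r.
  rewrite E E2 comp_assoc H -!comp_assoc braid_nat //.
Qed.

Lemma cent_mono {C C' : Obj D} (g : Hom D C A) (f1 f2 : Hom D C' C) :
  is_left_centralizer m phi g -> g ∘ f1 = g ∘ f2 -> f1 = f2.
Proof.
  move=> [Hc Hu] E.
  case: (Hu _ _ (cent_comp g f1 Hc)) => f0 [_ U].
  by rewrite -(U f1 eq_refl) -(U f2 (eq_sym E)).
Qed.

Lemma cent_unit : centralizes m phi u.
Proof.
  rewrite /centralizes.
  have E : u ⊗ phi = (u ⊗ 1) ∘ (1 ⊗ phi) by rewrite tcomp comp_id_l comp_id_r.
  have E2 : phi ⊗ u = (1 ⊗ u) ∘ (phi ⊗ 1) by rewrite tcomp comp_id_l comp_id_r.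
  rewrite E E2 !comp_assoc (proj1 (proj2 HA)) (proj2 (proj2 HA)) lunit_nat.
  by rewrite runit_nat -comp_assoc rho_braid.
Qed.

Lemma cent_prod {C : Obj D} (g : Hom D C A) :
  centralizes m phi g -> centralizes m phi (m ∘ (g ⊗ g)).
Proof.
  rewrite /centralizes => H.
  rewrite L_mm H.
  have E : g ⊗ (m ∘ ((phi ⊗ g) ∘ braid C S)) = (g ⊗ (m ∘ (phi ⊗ g))) ∘ (1 ⊗ braid C S)
    by rewrite tcomp comp_id_r comp_assoc.
  rewrite E comp_assoc L_mm' H.
  have E3 : (m ∘ ((phi ⊗ g) ∘ braid C S)) ⊗ g = ((m ∘ (phi ⊗ g)) ⊗ g) ∘ (braid C S ⊗ 1)
    by rewrite tcomp comp_id_r comp_assoc.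
  rewrite E3 !comp_assoc L_mm braid_tens !comp_assoc //.
Qed.

End Lemmas.
Arguments cent_prod {D A m u} HA {S phi C g}.
Arguments cent_unit {D A m u} HA {S phi}.
Arguments cent_mono {D A m S phi C C' g f1 f2}.
Arguments L_mm {D A m u} HA {X Y Z}.
Arguments tcomp {D X X' Y Y' Z Z'}.

Local Notation "g ∘ f" := (comp g f) (at level 40, left associativity).
Local Notation "f ⊗ g" := (tensm f g) (at level 35).

Theorem proposition2p8 (D : BraidedMonoidalCategory) (A : Obj D)
    (m : Hom D (tens A A) A) (u : Hom D unit A) (HA : is_algebra m u)
    (S : Obj D) (phi : Hom D S A) :
  (* existence: any left centralizer carries an algebra structure making
     its structure morphism an algebra morphism *)
  (forall (C : Obj D) (gamma : Hom D C A),
     is_left_centralizer m phi gamma ->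
     exists (mC : Hom D (tens C C) C) (uC : Hom D unit C),
       is_algebra mC uC /\ is_algebra_morphism mC uC m u gamma)
  /\
  (* uniqueness up to unique isomorphism of algebras (over A) *)
  (forall (C1 : Obj D) (gamma1 : Hom D C1 A)
          (m1 : Hom D (tens C1 C1) C1) (u1 : Hom D unit C1)
          (C2 : Obj D) (gamma2 : Hom D C2 A)
          (m2 : Hom D (tens C2 C2) C2) (u2 : Hom D unit C2),
     is_left_centralizer m phi gamma1 ->
     is_algebra m1 u1 -> is_algebra_morphism m1 u1 m u gamma1 ->
     is_left_centralizer m phi gamma2 ->
     is_algebra m2 u2 -> is_algebra_morphism m2 u2 m u gamma2 ->
     exists! f : Hom D C1 C2,
       is_iso f /\ is_algebra_morphism m1 u1 m2 u2 f /\ comp gamma2 f = gamma1).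
Proof.
  split.
  - move=> C gamma Hc.
    case: (proj2 Hc _ _ (cent_prod HA (proj1 Hc))) => mC [HmC _].
    case: (proj2 Hc _ _ (cent_unit HA)) => uC [HuC _].
    exists mC, uC. split; [split; [|split] | split] => //.
    + apply: (cent_mono Hc).
      rewrite comp_assoc HmC -comp_assoc tcomp comp_id_r HmC (L_mm HA) //.
      rewrite !comp_assoc HmC -(comp_assoc (tensm _ mC)) tcomp comp_id_r HmC.
      reflexivity.
    + apply: (cent_mono Hc).
      rewrite comp_assoc HmC -comp_assoc tcomp comp_id_r HuC.
      have E : tensm u gamma = tensm u (idm A) ∘ tensm (idm unit) gamma
        by rewrite tcomp comp_id_l comp_id_r.
      by rewrite E comp_assoc (proj1 (proj2 HA)) lunit_nat.
    + apply: (cent_mono Hc).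
      rewrite comp_assoc HmC -comp_assoc tcomp comp_id_r HuC.
      have E : tensm gamma u = tensm (idm A) u ∘ tensm gamma (idm unit)
        by rewrite tcomp comp_id_l comp_id_r.
      by rewrite E comp_assoc (proj2 (proj2 HA)) runit_nat.
  - move=> C1 g1 m1 u1 C2 g2 m2 u2 Hc1 Ha1 [Hm1 Hu1] Hc2 Ha2 [Hm2 Hu2].
    case: (proj2 Hc2 _ _ (proj1 Hc1)) => f [Hf Uf].
    case: (proj2 Hc1 _ _ (proj1 Hc2)) => h [Hh _].
    exists f. split.
    + split; [|split; [split|]] => //.
      * exists h. split.
        -- apply: (cent_mono Hc1). by rewrite comp_assoc Hh Hf comp_id_r.
        -- apply: (cent_mono Hc2). by rewrite comp_assoc Hf Hh comp_id_r.
      * apply: (cent_mono Hc2).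
        by rewrite !comp_assoc Hf Hm1 Hm2 -comp_assoc tcomp Hf.
      * apply: (cent_mono Hc2). by rewrite comp_assoc Hf Hu1 Hu2.
    + move=> f' [_ [_ Hf']]. exact: Uf.
Qed.
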